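(* Let $B$ be a finite dimensional C*-algebra of dimension $n\ge4$ with its canonical trace. Define $(\mu^* )^{(0)}=id_1$ and, for $p\ge1$, $(\mu^* )^{(p)}=(id_{p-1}\otimes\mu^* )(id_{p-2}\otimes\mu^* )\cdots(id_1\otimes\mu^* )\mu^*\in Hom_{\mathcal C_B}(1,p+1)$; for $p\ge1$ set $\eta^{(p)}=(\mu^* )^{(p-1)}\eta\in Hom_{\mathcal C_B}(0,p)$. Then for every $k\in\mathbb N$, every arrow in $Hom_{\mathcal C_B}(0,k)$ is a linear combination of compositions of maps of the form $id_a\otimes\eta^{(p)}\otimes id_b$ with $a,b,p\in\mathbb N$.
   Context: The canonical trace $\tau$ of $B$ is the restriction to $B$ of the normalised trace of $\mathcal L(B)$ via the left regular representation. $B^{\otimes m}$ ($B^{\otimes0}=\mathbb C$) are Hilbert spaces via $\langle x,y\rangle=\tau(y^*x)$; $\mu$ is multiplication, $\eta:\mathbb C\to B$ is $1\mapsto1$, $id_m$ is the identity of $B^{\otimes m}$. $\mathcal C_B$ is the concrete monoidal W*-category with objects $k\in\mathbb N$ (Hilbert space $B^{\otimes k}$) whose morphisms $Hom_{\mathcal C_B}(k,l)\subset\mathcal L(B^{\otimes k},B^{\otimes l})$ are the linear combinations of composable compositions of tensor products of $\eta,\mu,\eta^*,\mu^*,id_m$. *)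

(* Defs.v *)
(* finite-dimensional C*-algebras modelled by Artin-Wedderburn
   as B = (+)_i M_{n_i}(C), C = complex numbers R[i] over a realType R. *)
From HB Require Import structures.
From mathcomp Require Import all_boot all_order all_algebra.
From mathcomp Require Import reals.
From mathcomp Require Import complex.
From Stdlib Require Import ClassicalEpsilon.
Set Implicit Arguments. Unset Strict Implicit. Unset Printing Implicit Defensive.
Import Order.TTheory GRing.Theory Num.Theory.
Local Open Scope ring_scope.

Section CB.
Variable R : realType.
Variable ns : seq nat.  (* block sizes: B = M_{ns_0}(C) (+) ... (+) M_{ns_r}(C) *)

Notation C := (complex R).

(* basis of B: matrix units e^i_{jk}, indexed by (i, (j, k)) *)
Definition fib (i : 'I_(size ns)) : finType :=
  ('I_(nth 0%N ns i) * 'I_(nth 0%N ns i))%type.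
Local Notation I := {i : 'I_(size ns) & fib i}.

Definition blk (a : I) : nat := tag a.
Definition row (a : I) : nat := (tagged a).1.
Definition col (a : I) : nat := (tagged a).2.

(* structure constants: e_a e_b = sum_c mu_coef a b c e_c *)
Definition mu_coef (a b c : I) : C :=
  ([&& blk a == blk b, blk c == blk a, col a == row b,
       row c == row a & col c == col b])%:R.

Definition bstar (b : I) : I := existT _ (tag b) ((tagged b).2, (tagged b).1).

(* An element of B^{(x)k} is given by its coefficients on the basis tensors
   e_{s_1} (x) ... (x) e_{s_k}, s a k-tuple of basis indices (only tuples of
   the right size are meaningful). *)
Definition vec := seq I -> C.
(* A linear map B^{(x)k} -> B^{(x)l} is given by its matrix: f y x is the
   coefficient of the output basis tensor y (size l) on the input one x (size k). *)
Definition mor := seq I -> seq I -> C.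

Definition eqmor (k l : nat) (f g : mor) : Prop :=
  forall (y : l.-tuple I) (x : k.-tuple I), f y x = g y x.

Definition idm : mor := fun y x => (y == x)%:R.

Definition comp (m : nat) (g f : mor) : mor :=
  fun z x => \sum_(y : m.-tuple I) g z y * f y x.

Definition tens (k1 l1 : nat) (f g : mor) : mor :=
  fun y x => f (take l1 y) (take k1 x) * g (drop l1 y) (drop k1 x).

Definition apply (k : nat) (f : mor) (x : vec) : vec :=
  fun y => \sum_(s : k.-tuple I) f y s * x s.

Definition mu : mor := fun y x =>
  match y, x with [:: c], [:: a; b] => mu_coef a b c | _, _ => 0 end.
Definition eta : mor := fun y x =>
  match y, x with [:: c], [::] => (row c == col c)%:R | _, _ => 0 end.

(* canonical trace: normalised trace of the left regular representation
   L_x (e_b) = x e_b = sum_a sum_c x_a mu_coef a b c e_c *)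
Definition tau (x : I -> C) : C :=
  (#|{: I}|%:R)^-1 * \sum_(b : I) \sum_(a : I) x a * mu_coef a b b.

(* <e_a, e_b> = tau(e_b^* e_a) *)
Definition ip1 (a b : I) : C :=
  \sum_(c : I) mu_coef (bstar b) a c * tau (fun d => (d == c)%:R).

(* inner product of the Hilbert space B^{(x)k} (tensor product inner product,
   i.e. <x, y> = tau^{(x)k}(y^* x)), linear in the first variable *)
Definition ipb (s t : seq I) : C := \prod_(p <- zip s t) ip1 p.1 p.2.
Definition ip (k : nat) (x y : vec) : C :=
  \sum_(s : k.-tuple I) \sum_(t : k.-tuple I) x s * conjc (y t) * ipb s t.

Definition is_adjoint (k l : nat) (f g : mor) : Prop :=
  forall x y : vec, ip l (apply k f x) y = ip k x (apply l g y).

Definition adjoint (k l : nat) (f : mor) : mor :=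
  epsilon (inhabits (fun _ _ => 0)) (is_adjoint k l f).

Inductive gen : nat -> nat -> mor -> Prop :=
| gen_eta : gen 0 1 eta
| gen_mu : gen 2 1 mu
| gen_eta_adj : gen 1 0 (adjoint 0 1 eta)
| gen_mu_adj : gen 1 2 (adjoint 2 1 mu)
| gen_id m : gen m m idm.

Inductive tgen : nat -> nat -> mor -> Prop :=
| tgen_one k l f : gen k l f -> tgen k l f
| tgen_tens k1 l1 f k2 l2 g :
    gen k1 l1 f -> tgen k2 l2 g -> tgen (k1 + k2) (l1 + l2) (tens k1 l1 f g).

Inductive cgen : nat -> nat -> mor -> Prop :=
| cgen_one k l f : tgen k l f -> cgen k l f
| cgen_comp k m l f g : cgen k m f -> tgen m l g -> cgen k l (comp m g f).

Definition inspan (S : mor -> Prop) (k l : nat) (f : mor) : Prop :=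
  exists (N : nat) (c : 'I_N -> C) (fs : 'I_N -> mor),
    (forall i, S (fs i)) /\
    eqmor k l f (fun y x => \sum_(i < N) c i * fs i y x).

Definition HomCB (k l : nat) (f : mor) : Prop := inspan (cgen k l) k l f.

Fixpoint mu_adj_pow (p : nat) : mor :=
  match p with
  | 0 => idm
  | p'.+1 => comp p'.+1 (tens p' p' idm (adjoint 2 1 mu)) (mu_adj_pow p')
  end.

Definition eta_pow (p : nat) : mor := comp 1 (mu_adj_pow p.-1) eta.

Definition layer (a p b : nat) : mor := tens a a idm (tens 0 p (eta_pow p) idm).

Inductive etacomp : nat -> mor -> Prop :=
| etacomp_nil : etacomp 0 idm
| etacomp_cons k f a p b : etacomp k f -> (0 < p)%N -> k = (a + b)%N ->
    etacomp (a + p + b) (comp k (layer a p b) f).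

End CB.

(* Main.v *)
Require Import Defs.
From mathcomp Require Import all_boot all_order all_algebra.
From mathcomp Require Import reals complex ring zify.
From Stdlib Require Import ClassicalEpsilon.
Set Implicit Arguments. Unset Strict Implicit. Unset Printing Implicit Defensive.
Import Order.TTheory GRing.Theory Num.Theory.
Local Open Scope ring_scope.

Section Main.
Variable R : realType.
Variable ns : seq nat.
Hypothesis ns_pos : all (fun m => 0 < m)%N ns.
Hypothesis N4 : (4 <= \sum_(m <- ns) m ^ 2)%N.

Local Notation C := (R[i]).
Local Notation I := {i : 'I_(size ns) & @fib ns i}.
Local Notation row := (@Defs.row ns).
Local Notation col := (@Defs.col ns).

Lemma Ieq (a b : I) :
  (a == b) = [&& blk a == blk b, row a == row b & col a == col b].
Proof.
case: a => i [j k]; case: b => i' [j' k']; rewrite /blk /row /col /=.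
case: (eqVneq i i') => [E|ne].
  subst i'; by rewrite eqxx eq_Tagged /= xpair_eqE.
have -> : (i == i' :> nat) = false by apply/negbTE; rewrite val_eqE.
apply/negbTE/negP => /eqP h; move: ne; have /= -> := congr1 tag h; by rewrite eqxx.
Qed.

Definition nbn (a : I) : nat := nth 0%N ns (blk a).
Definition nb (a : I) : C := (nbn a)%:R.
Definition NN : C := #|{: I}|%:R.
Definition kap (a : I) : C := NN / nb a.
Definition wt (a : I) : C := nb a / NN.

Lemma nbn_gt0 a : (0 < nbn a)%N.
Proof.
rewrite /nbn; move/all_nthP: ns_pos; apply.
by rewrite /blk ltn_ord.
Qed.

Lemma nb_neq0 a : nb a != 0.
Proof. by rewrite /nb pnatr_eq0 -lt0n nbn_gt0. Qed.

Lemma sum_sig (G : I -> C) :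
  \sum_(c : I) G c = \sum_(i : 'I_(size ns)) \sum_(x : @fib ns i) G (Tagged (@fib ns) x).
Proof.
have := sig_big_dep (op := +%R) (idx := 0) (J := @fib ns) xpredT (fun i _ => true) (fun i x => G (Tagged (@fib ns) x)).
move=> /= ->; by apply: eq_bigr => -[i x].
Qed.

Lemma sum_delta (T : finType) (G : T -> C) (c0 : T) :
  \sum_(c : T) (c == c0)%:R * G c = G c0.
Proof.
rewrite (bigD1 c0) //= eqxx mul1r big1 ?addr0 // => c /negbTE ->; by rewrite mul0r.
Qed.

Lemma sum_deltaC (T : finType) (G : T -> C) (c0 : T) :
  \sum_(c : T) (c0 == c)%:R * G c = G c0.
Proof. by rewrite -(sum_delta G c0); apply: eq_bigr => c _; rewrite eq_sym. Qed.

Lemma card_I : NN = \sum_(i : 'I_(size ns)) ((nth 0%N ns i) * (nth 0%N ns i))%:R.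
Proof.
rewrite /NN -sum1_card natr_sum sum_sig; apply: eq_bigr => i _.
by rewrite sumr_const card_prod !card_ord.
Qed.

Lemma cardI_nat : #|{: I}| = (\sum_(m <- ns) m ^ 2)%N.
Proof.
rewrite card_tagged sumnE big_map big_enum /= (big_nth 0%N) big_mkord.
by apply: eq_bigr => i _; rewrite card_prod card_ord.
Qed.

Lemma NN_neq0 : NN != 0.
Proof. by rewrite /NN pnatr_eq0 cardI_nat -lt0n; apply: leq_trans N4. Qed.

Definition link (a b : I) : bool := (blk a == blk b) && (col a == row b).
Definition Ef (s : seq I) : C :=
  if s is c :: _ then (cycle link s)%:R * kap c ^+ (size s).-1 else 1.
Definition cab (a b : I) : I :=
  existT _ (tag a) ((tagged a).1, insubd (tagged a).1 (val (tagged b).2)).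
Definition dd (a : I) : I := existT _ (tag a) ((tagged a).1, (tagged a).1).

Lemma col_cab a b : blk a = blk b -> col (cab a b) = col b.
Proof.
move=> H; rewrite /Defs.col /= val_insubd.
have : (val (tagged b).2 < nth 0%N ns (tag a))%N by move: H; rewrite /blk => ->; apply: ltn_ord.
by move=> ->.
Qed.

Lemma kap_blk a b : blk a = blk b -> kap a = kap b.
Proof. by rewrite /kap /nb /nbn => ->. Qed.

Lemma wt_blk a b : blk a = blk b -> wt a = wt b.
Proof. by rewrite /wt /nb /nbn => ->. Qed.

Lemma wt_kap a b : blk a = blk b -> wt a * kap b = 1.
Proof.
move=> H; rewrite (kap_blk (esym H)) /wt /kap mulrA divfK ?NN_neq0 // mulfV //; exact: nb_neq0.
Qed.

Lemma kap_wt a b : blk a = blk b -> kap a * wt b = 1.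
Proof. by move=> H; rewrite mulrC wt_kap. Qed.

Lemma path_blk x s : path link x s -> all (fun y => blk y == blk x) s.
Proof.
elim: s x => //= y s IH x /andP[/andP[/eqP bxy _] /IH].
by rewrite bxy eqxx.
Qed.

Lemma cycle_blk c s y : cycle link (c :: s) -> y \in c :: s -> blk y = blk c.
Proof.
rewrite /= => /path_blk /allP H; rewrite inE => /orP[/eqP->//|ys].
by apply/eqP/H; rewrite mem_rcons inE ys orbT.
Qed.

Lemma Ef_rot n s : Ef (rot n s) = Ef s.
Proof.
case: s => [|c s]; first by case: n.
case E: (rot n (c :: s)) => [|d t]; first by move/(congr1 size): E; rewrite size_rot.
have dm : d \in c :: s by rewrite -(mem_rot n) E inE eqxx.
rewrite /Ef -E rot_cycle size_rot.
case Hc: (cycle link (c :: s)); last by rewrite !mul0r.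
by rewrite (kap_blk (cycle_blk Hc dm)).
Qed.

Lemma Ef_catC s1 s2 : Ef (s1 ++ s2) = Ef (s2 ++ s1).
Proof. by rewrite -(rot_size_cat s1 s2) Ef_rot. Qed.

Lemma link_cab_l x a b : link x (cab a b) = link x a.
Proof. by []. Qed.

Lemma link_cab_r a b y : blk a = blk b -> link (cab a b) y = link b y.
Proof. by move=> H; rewrite /link col_cab // -H. Qed.

Lemma Ef_merge a b r :
  Ef (a :: b :: r) = (link a b)%:R * kap a * Ef (cab a b :: r).
Proof.
rewrite /Ef /=.
case Lab: (link a b) => /=; last by rewrite !mul0r.
have bab : blk a = blk b by move: Lab => /andP[/eqP].
have -> : path link b (rcons r a) = path link (cab a b) (rcons r (cab a b)).
  case: r => [|r0 r] /=; first by rewrite link_cab_r // link_cab_l.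
  by rewrite link_cab_r // !rcons_path link_cab_l.
by rewrite mul1r exprS mulrCA.
Qed.

Lemma mu_coefE a b c : mu_coef R a b c = (link a b && (c == cab a b))%:R.
Proof.
rewrite /mu_coef Ieq /link.
case: (eqVneq (blk a) (blk b)) => H; last by rewrite /=.
rewrite col_cab //; change (blk (cab a b)) with (blk a); change (row (cab a b)) with (row a) => /=.
by case: (blk c == blk a); case: (col a == row b); case: (row c == row a); case: (col c == col b).
Qed.

Lemma mus_front a b r :
  \sum_c mu_coef R a b c * kap c * Ef (c :: r) = Ef (a :: b :: r).
Proof.
rewrite Ef_merge; under eq_bigr => c _ do rewrite mu_coefE.
case Lab: (link a b) => /=; last by rewrite big1 ?mul0r // => c _; rewrite !mul0r.
rewrite mul1r; under eq_bigr => c _ do rewrite -mulrA.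
by rewrite sum_delta.
Qed.

Lemma mus_gen a b w1 w3 :
  \sum_c mu_coef R a b c * kap c * Ef (w1 ++ c :: w3) = Ef (w1 ++ a :: b :: w3).
Proof.
rewrite Ef_catC !cat_cons -mus_front; apply: eq_bigr => c _; by rewrite Ef_catC.
Qed.

Lemma row_count c : \sum_(a : I) ((blk a == blk c) && (row a == row c))%:R = nb c.
Proof.
rewrite sum_sig (bigD1 (tag c)) //=.
rewrite [X in _ + X]big1 ?addr0 => [|i ne]; last first.
  apply: big1 => x _; rewrite /blk /=.
  have -> : (i == tag c :> nat) = false by apply/negbTE; rewrite val_eqE.
  by [].
rewrite /blk /= eqxx /=.
transitivity (\sum_(j : 'I_(nth 0%N ns (tag c))) \sum_(k : 'I_(nth 0%N ns (tag c)))
    (j == (tagged c).1)%:R : C).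
  rewrite pair_bigA; apply: eq_bigr => -[j k] _ /=.
  by rewrite /Defs.row /= val_eqE.
under eq_bigr do rewrite sumr_const card_ord.
rewrite (bigD1 (tagged c).1) //= eqxx big1 ?addr0 => [//|j /negbTE-> /=].
by rewrite mul0rn.
Qed.

Definition bb (a d : I) : I :=
  existT _ (tag a) ((tagged a).2, insubd (tagged a).2 (val (tagged d).2)).

Lemma mu_coef_bb a b d :
  mu_coef R a b d = (b == bb a d)%:R * ((blk d == blk a) && (row d == row a))%:R.
Proof.
rewrite /mu_coef.
case: (eqVneq (blk d) (blk a)) => H; last by rewrite /= !andbF mulr0.
have cbb : col (bb a d) = col d.
  rewrite /Defs.col /= val_insubd.
  have : (val (tagged d).2 < nth 0%N ns (tag a))%N by move: H; rewrite /blk => <-; apply: ltn_ord.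
  by move=> ->.
rewrite Ieq cbb; change (blk (bb a d)) with (blk a); change (row (bb a d)) with (col a).
rewrite -natrM mulnb /= (eq_sym (blk a)) (eq_sym (col a)) (eq_sym (col d)).
by case: (blk b == blk a); case: (row b == col a); case: (col b == col d); case: (row d == row a).
Qed.

Lemma mu_count d : \sum_a \sum_b mu_coef R a b d = nb d.
Proof.
rewrite -(row_count d); apply: eq_bigr => a _.
under eq_bigr do rewrite mu_coef_bb.
by rewrite sum_delta eq_sym (eq_sym (row a)).
Qed.

Lemma mu_front d r :
  \sum_a \sum_b mu_coef R a b d * Ef (a :: b :: r) = NN * Ef (d :: r).
Proof.
transitivity (\sum_a \sum_b mu_coef R a b d * (kap d * Ef (d :: r))).
  apply: eq_bigr => a _; apply: eq_bigr => b _.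
  rewrite Ef_merge mu_coefE.
  case Lab: (link a b) => /=; last by rewrite !mul0r.
  case: (eqVneq d (cab a b)) => [->|]; last by rewrite !mul0r.
  by rewrite !mul1r.
transitivity ((\sum_a \sum_b mu_coef R a b d) * (kap d * Ef (d :: r))).
  rewrite mulr_suml; apply: eq_bigr => a _; by rewrite mulr_suml.
rewrite mu_count mulrA [nb d * _]mulrC /kap divfK //; exact: nb_neq0.
Qed.

Lemma mu_gen w1 w3 d :
  \sum_a \sum_b mu_coef R a b d * Ef (w1 ++ a :: b :: w3) = NN * Ef (w1 ++ d :: w3).
Proof.
rewrite Ef_catC !cat_cons -mu_front; apply: eq_bigr => a _; apply: eq_bigr => b _.
by rewrite Ef_catC.
Qed.

Lemma blk_cab (a b : I) : blk (cab a b) = blk a. Proof. by []. Qed.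
Lemma row_cab (a b : I) : row (cab a b) = row a. Proof. by []. Qed.
Lemma blk_bstar (a : I) : blk (bstar a) = blk a. Proof. by []. Qed.
Lemma row_bstar (a : I) : row (bstar a) = col a. Proof. by []. Qed.
Lemma col_bstar (a : I) : col (bstar a) = row a. Proof. by []. Qed.
Lemma kap_bstar (a : I) : kap (bstar a) = kap a. Proof. by []. Qed.

Lemma blk_dd (a : I) : blk (dd a) = blk a. Proof. by []. Qed.
Lemma row_dd (a : I) : row (dd a) = row a. Proof. by []. Qed.
Lemma col_dd (a : I) : col (dd a) = row a. Proof. by []. Qed.

Lemma diag_sum : \sum_c (row c == col c)%:R * nb c = NN.
Proof.
rewrite card_I sum_sig; apply: eq_bigr => i _.
transitivity (\sum_(j : 'I_(nth 0%N ns i)) \sum_(k : 'I_(nth 0%N ns i))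
    (j == k)%:R * (nth 0%N ns i)%:R : C).
  rewrite pair_bigA; apply: eq_bigr => -[j k] _ /=.
  by rewrite /Defs.row /Defs.col /= val_eqE.
under eq_bigr do rewrite sum_deltaC.
by rewrite sumr_const card_ord natrM mulr_natr.
Qed.

Lemma etas_front r :
  \sum_c wt c * (row c == col c)%:R * Ef (c :: r) = Ef r.
Proof.
case: r => [|r0 r].
  transitivity ((\sum_c (row c == col c)%:R * nb c) / NN).
    rewrite mulr_suml; apply: eq_bigr => c _.
    rewrite /Ef /= /link eqxx /= andbT expr0 mulr1 (eq_sym (col c)) /wt.
    case: (row c == col c); by rewrite ?mulr1 ?mul1r ?mulr0 ?mul0r.
  by rewrite diag_sum mulfV // NN_neq0.
transitivity (\sum_c (c == dd r0)%:R * (wt (dd r0) * Ef (dd r0 :: r0 :: r))).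
  apply: eq_bigr => c _.
  case: (eqVneq c (dd r0)) => [->|ne].
    by rewrite /Defs.row /Defs.col /= eqxx mulr1 mul1r.
  rewrite mul0r; case: eqP => Hd; last by rewrite mulr0 mul0r.
  rewrite mulr1; case Lc: (link c r0); last by rewrite /Ef /= Lc /= mul0r mulr0.
  exfalso; move/negP: ne; apply; move: Lc => /andP[/eqP H1 /eqP H2].
  by rewrite Ieq blk_dd row_dd col_dd H1 Hd H2 !eqxx.
rewrite sum_delta /Ef /=.
have -> : link (dd r0) r0 = true by rewrite /link blk_dd col_dd !eqxx.
rewrite /= !rcons_path.
have -> : link (last r0 r) (dd r0) = link (last r0 r) r0 by [].
change (kap (dd r0)) with (kap r0); change (wt (dd r0)) with (wt r0).
have W : wt r0 * kap r0 = 1 by apply: wt_kap.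
by rewrite -[RHS]mul1r -W exprS; ring.
Qed.

Lemma etas_gen w1 w3 :
  \sum_c wt c * (row c == col c)%:R * Ef (w1 ++ c :: w3) = Ef (w1 ++ w3).
Proof.
rewrite [RHS]Ef_catC -etas_front; apply: eq_bigr => c _; by rewrite Ef_catC.
Qed.

Definition Dv (s : seq I) (y : I) : C := wt y * Ef (s ++ [:: bstar y]).

Lemma Dv1 s0 y : Dv [:: s0] y = (s0 == y)%:R.
Proof.
rewrite /Dv /Ef /= /link blk_bstar row_bstar col_bstar andbT expr1 Ieq.
case: (eqVneq (blk s0) (blk y)) => H; last by rewrite /= mul0r mulr0.
rewrite /= mulrCA wt_kap ?mulr1 // (eq_sym (row y)).
by case: (col s0 == col y); case: (row s0 == row y).
Qed.

Lemma bool_right x y d :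
  (link x y && (d == cab x y)) = (link d (bstar y) && (x == cab d (bstar y))).
Proof.
rewrite /link !Ieq !blk_cab !row_cab blk_bstar row_bstar.
case: (eqVneq (blk x) (blk y)) => Hxy; case: (eqVneq (blk d) (blk y)) => Hdy /=.
- rewrite col_cab // col_cab // col_bstar Hxy Hdy eqxx /=.
  rewrite (eq_sym (row d)) (eq_sym (col d)).
  by case: (col x == row y); case: (row x == row d); case: (col y == col d).
- by rewrite Hxy eq_sym (negbTE Hdy) /= !andbF.
- by rewrite Hdy (negbTE Hxy) /= !andbF.
- by [].
Qed.

Lemma bool_left x y d :
  (link y x && (d == cab y x)) = (link (bstar y) d && (x == cab (bstar y) d)).
Proof.
rewrite /link !Ieq !blk_cab !row_cab blk_bstar row_bstar col_bstar.
case: (eqVneq (blk y) (blk x)) => Hyx; case: (eqVneq (blk y) (blk d)) => Hyd /=.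
- rewrite col_cab // col_cab //.
  rewrite (eq_sym (row d)) (eq_sym (col d)) (eq_sym (col y)).
  by case: (row x == col y); case: (row y == row d); case: (col x == col d).
- by rewrite andbF.
- by rewrite andbF.
- by [].
Qed.

Lemma Dv_right s' d y :
  \sum_x mu_coef R x y d * Ef (s' ++ [:: x]) = Dv (s' ++ [:: d]) y.
Proof.
rewrite /Dv -catA Ef_catC !cat_cons cat0s Ef_merge.
under eq_bigr do rewrite Ef_catC cat1s mu_coefE bool_right -mulnb natrM -mulrA.
rewrite -mulr_sumr sum_delta.
case Ld: (link d (bstar y)); last by rewrite !mul0r mulr0.
rewrite !mul1r mulrA wt_kap ?mul1r //.
by move: Ld => /andP[/eqP ->].
Qed.

Lemma Dv_left d t y :
  \sum_x mu_coef R y x d * Ef (x :: t) = Dv (d :: t) y.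
Proof.
rewrite /Dv Ef_catC cat1s Ef_merge.
under eq_bigr do rewrite mu_coefE bool_left -mulnb natrM -mulrA.
rewrite -mulr_sumr sum_delta.
case Ld: (link (bstar y) d); last by rewrite !mul0r mulr0.
by rewrite !mul1r mulrA kap_bstar wt_kap ?mul1r.
Qed.

Lemma Dv_mus w1 a b w3 y :
  \sum_c mu_coef R a b c * kap c * Dv (w1 ++ c :: w3) y = Dv (w1 ++ a :: b :: w3) y.
Proof.
rewrite /Dv -catA !cat_cons -mus_gen mulr_sumr; apply: eq_bigr => c _.
by rewrite -catA cat_cons mulrCA.
Qed.

Definition ttake m n (t : (m + n).-tuple I) : m.-tuple I :=
  @Tuple m I (take m t) (introT eqP (size_takel (leq_trans (leq_addr n m) (eq_leq (esym (size_tuple t)))))).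

Lemma tdrop_proof m n (t : (m + n).-tuple I) : size (drop m t) == n.
Proof. by rewrite size_drop size_tuple addKn. Qed.

Definition tdrop m n (t : (m + n).-tuple I) : n.-tuple I := Tuple (tdrop_proof t).

Lemma sum_tuple_cat m n (F : seq I -> C) :
  \sum_(x : (m + n).-tuple I) F x =
  \sum_(x1 : m.-tuple I) \sum_(x2 : n.-tuple I) F (x1 ++ x2).
Proof.
rewrite pair_bigA /=.
rewrite (reindex (fun p : m.-tuple I * n.-tuple I => cat_tuple p.1 p.2)) //=.
exists (fun t => (ttake t, tdrop t)) => [[x1 x2] _ | t _].
  congr pair; apply: val_inj => /=.
    by rewrite take_size_cat // size_tuple.
  by rewrite drop_size_cat // size_tuple.
by apply: val_inj; rewrite /= cat_take_drop.
Qed.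

Lemma sum_tuple1 (F : seq I -> C) :
  \sum_(x : 1.-tuple I) F x = \sum_c F [:: c].
Proof.
rewrite (reindex (fun c : I => [tuple c])) //=.
exists (fun t : 1.-tuple I => thead t) => [c _ // | t _].
apply: val_inj; case: t => s; case: s => [|c [|]] //= H.
Qed.

Lemma sum_tuple0 (F : seq I -> C) : \sum_(x : 0.-tuple I) F x = F [::].
Proof.
rewrite (big_pred1 [tuple]) // => x /=; rewrite [x]tuple0; apply: esym; apply: eqxx.
Qed.

Lemma sum_tuple_delta m (t : seq I) (F : seq I -> C) :
  size t = m -> \sum_(x : m.-tuple I) (t == x)%:R * F x = F t.
Proof.
move=> st; rewrite (bigD1 (Tuple (introT eqP st))) //= eqxx mul1r big1 ?addr0 // => x ne.
case: eqP => [E|]; last by rewrite mul0r.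
by exfalso; move/negP: ne; apply; apply/eqP/val_inj => /=.
Qed.

Definition vect := seq I -> C.

Definition eqv k (v u : vect) := forall z : seq I, size z = k -> v z = u z.

Definition ins (a m l : nat) (g : mor R ns) (v : vect) : vect :=
  fun z => \sum_(x : m.-tuple I) g (take l (drop a z)) x * v (take a z ++ x ++ drop (a + l) z).

Lemma insE a m l g v u1 u2 u3 : size u1 = a -> size u2 = l ->
  ins a m l g v (u1 ++ u2 ++ u3) = \sum_(x : m.-tuple I) g u2 x * v (u1 ++ x ++ u3).
Proof.
move=> s1 s2; rewrite /ins (drop_size_cat _ s1) (take_size_cat _ s2) (take_size_cat _ s1).
have -> : drop (a + l) (u1 ++ u2 ++ u3) = u3 by rewrite catA drop_size_cat // size_cat s1 s2.
by [].
Qed.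

Lemma split_at (z : seq I) n1 n2 : size z = (n1 + n2)%N ->
  exists u1 u2, [/\ z = u1 ++ u2, size u1 = n1 & size u2 = n2].
Proof.
move=> sz; exists (take n1 z), (drop n1 z); split.
- by rewrite cat_take_drop.
- by rewrite size_takel // sz leq_addr.
- by rewrite size_drop sz addKn.
Qed.

Lemma split3 (z : seq I) n1 n2 n3 : size z = (n1 + n2 + n3)%N ->
  exists u1 u2 u3, [/\ z = u1 ++ u2 ++ u3, size u1 = n1, size u2 = n2 & size u3 = n3].
Proof.
rewrite -addnA => /split_at [u1 [w [-> s1 sw]]].
have [u2 [u3 [-> s2 s3]]] := split_at sw.
by exists u1, u2, u3.
Qed.

Lemma split5 (z : seq I) n1 n2 n3 n4 n5 : size z = (n1 + n2 + n3 + n4 + n5)%N ->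
  exists u1 u2 u3 u4 u5, [/\ z = u1 ++ u2 ++ u3 ++ u4 ++ u5, size u1 = n1, size u2 = n2,
     size u3 = n3 & size u4 = n4 /\ size u5 = n5].
Proof.
rewrite -!addnA => /split_at [u1 [w [-> s1 sw]]].
have [u2 [w2 [-> s2 sw2]]] := split_at sw.
have [u3 [w3 [-> s3 sw3]]] := split_at sw2.
have [u4 [u5 [-> s4 s5]]] := split_at sw3.
by exists u1, u2, u3, u4, u5.
Qed.

Lemma split4 (z : seq I) n1 n2 n3 n4 : size z = (n1 + n2 + n3 + n4)%N ->
  exists u1 u2 u3 u4, [/\ z = u1 ++ u2 ++ u3 ++ u4, size u1 = n1, size u2 = n2,
     size u3 = n3 & size u4 = n4].
Proof.
rewrite -!addnA => /split_at [u1 [w [-> s1 sw]]].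
have [u2 [w2 [-> s2 sw2]]] := split_at sw.
have [u3 [u4 [-> s3 s4]]] := split_at sw2.
by exists u1, u2, u3, u4.
Qed.

Lemma size3 (u1 : seq I) (x : seq I) u3 : size (u1 ++ x ++ u3) = (size u1 + size x + size u3)%N.
Proof. by rewrite !size_cat addnA. Qed.

Lemma ins_eqv a m l b g v u : eqv (a + m + b) v u -> eqv (a + l + b) (ins a m l g v) (ins a m l g u).
Proof.
move=> H z /split3 [u1 [u2 [u3 [-> s1 s2 s3]]]].
rewrite !insE //; apply: eq_bigr => x _; by rewrite H // size3 s1 s3 size_tuple.
Qed.

Lemma ins_ext a m l b (g h : mor R ns) v :
  (forall (s : seq I) (x : m.-tuple I), size s = l -> g s (val x) = h s (val x)) ->
  eqv (a + l + b) (ins a m l g v) (ins a m l h v).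
Proof.
move=> H z /split3 [u1 [u2 [u3 [-> s1 s2 s3]]]].
rewrite !insE //; apply: eq_bigr => x _; by rewrite H.
Qed.

Lemma ins_id a m b v : eqv (a + m + b) (ins a m m (@idm R ns) v) v.
Proof.
move=> z /split3 [u1 [u2 [u3 [-> s1 s2 s3]]]].
rewrite insE // /idm; exact: (sum_tuple_delta (fun x => v (u1 ++ x ++ u3))).
Qed.

Lemma ins_comm a m l d q r e g h v :
  eqv (a + l + d + r + e) (ins a m l g (ins (a + m + d) q r h v))
                          (ins (a + l + d) q r h (ins a m l g v)).
Proof.
move=> z /split5 [u1 [u2 [u3 [u4 [u5 [-> s1 s2 s3 [s4 s5]]]]]]].
rewrite insE //.
have -> : u1 ++ u2 ++ u3 ++ u4 ++ u5 = (u1 ++ u2 ++ u3) ++ u4 ++ u5 by rewrite !catA.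
rewrite insE ?size3 ?s1 ?s2 ?s3 //.
transitivity (\sum_(x : m.-tuple I) \sum_(y : q.-tuple I)
   g u2 x * (h u4 y * v (u1 ++ x ++ u3 ++ y ++ u5))).
  apply: eq_bigr => x _.
  have -> : u1 ++ x ++ u3 ++ u4 ++ u5 = (u1 ++ x ++ u3) ++ u4 ++ u5 by rewrite !catA.
  rewrite insE ?size3 ?s1 ?s3 ?size_tuple // mulr_sumr; apply: eq_bigr => y _.
  by rewrite !catA.
rewrite exchange_big; apply: eq_bigr => y _.
have -> : (u1 ++ u2 ++ u3) ++ y ++ u5 = u1 ++ u2 ++ (u3 ++ y ++ u5) by rewrite !catA.
rewrite insE // mulr_sumr; apply: eq_bigr => x _; by rewrite mulrCA.
Qed.

Lemma ins_overlap a j m l e q b g H v :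
  eqv (a + (j + l + e) + b) (ins (a + j) m l g (ins a q (j + m + e) H v))
      (ins a q (j + l + e) (fun s x => ins j m l g (fun s' => H s' x) s) v).
Proof.
move=> z; rewrite !addnA => /split5 [u1 [w1 [w2 [w3 [u3 [-> s1 sw1 sw2 [sw3 s3]]]]]]].
have -> : u1 ++ w1 ++ w2 ++ w3 ++ u3 = (u1 ++ w1) ++ w2 ++ (w3 ++ u3) by rewrite !catA.
rewrite insE ?size_cat ?s1 ?sw1 //.
have -> : (u1 ++ w1) ++ w2 ++ w3 ++ u3 = u1 ++ (w1 ++ w2 ++ w3) ++ u3 by rewrite !catA.
rewrite insE ?size3 ?sw1 ?sw2 ?sw3 //.
transitivity (\sum_(x' : m.-tuple I) \sum_(x : q.-tuple I)
   g w2 x' * (H (w1 ++ x' ++ w3) x * v (u1 ++ x ++ u3))).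
  apply: eq_bigr => x' _.
  have -> : (u1 ++ w1) ++ x' ++ w3 ++ u3 = u1 ++ (w1 ++ x' ++ w3) ++ u3 by rewrite !catA.
  by rewrite insE ?size3 ?sw1 ?sw3 ?size_tuple // mulr_sumr.
rewrite exchange_big; apply: eq_bigr => x _.
rewrite insE // mulr_suml; apply: eq_bigr => x' _; by rewrite mulrA.
Qed.

Lemma ins_tens a k1 l1 k2 l2 b f g v :
  eqv (a + (l1 + l2) + b) (ins a (k1 + k2) (l1 + l2) (tens k1 l1 f g) v)
      (ins a k1 l1 f (ins (a + k1) k2 l2 g v)).
Proof.
move=> z; rewrite !addnA => /split4 [u1 [w1 [w2 [u3 [-> s1 sw1 sw2 s3]]]]].
have -> : u1 ++ w1 ++ w2 ++ u3 = u1 ++ (w1 ++ w2) ++ u3 by rewrite !catA.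
rewrite insE ?size_cat ?sw1 ?sw2 //.
rewrite (sum_tuple_cat k1 k2 (fun x => tens k1 l1 f g (w1 ++ w2) x * v (u1 ++ x ++ u3))).
have -> : u1 ++ (w1 ++ w2) ++ u3 = u1 ++ w1 ++ (w2 ++ u3) by rewrite !catA.
rewrite insE //; apply: eq_bigr => x1 _.
have -> : u1 ++ x1 ++ w2 ++ u3 = (u1 ++ x1) ++ w2 ++ u3 by rewrite !catA.
rewrite insE ?size_cat ?s1 ?size_tuple // mulr_sumr; apply: eq_bigr => x2 _.
rewrite /tens (take_size_cat _ sw1) (drop_size_cat _ sw1) (take_size_cat _ (size_tuple x1)) (drop_size_cat _ (size_tuple x1)).
by rewrite -!mulrA !catA.
Qed.

Definition Wv k (v : vect) : Prop := inspan (@etacomp R ns k) 0 k (fun y _ => v y).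

Lemma Wv_ext k v u : Wv k v -> eqv k v u -> Wv k u.
Proof.
case=> N [c [fs [Hfs He]]] Hvu; exists N, c, fs; split => // y x.
rewrite /= -Hvu ?size_tuple //; exact: He.
Qed.

Lemma Wv0 k : Wv k (fun _ => 0).
Proof.
exists 0%N, (fun _ => 0), (fun _ => @idm R ns); split => [[] // | y x].
by rewrite big_ord0.
Qed.

Lemma Wv_add k c v u : Wv k v -> Wv k u -> Wv k (fun z => c * v z + u z).
Proof.
move=> [N1 [c1 [f1 [H1 E1]]]] [N2 [c2 [f2 [H2 E2]]]].
exists (N1 + N2)%N, (fun i => match split i with inl j => c * c1 j | inr j => c2 j end),
  (fun i => match split i with inl j => f1 j | inr j => f2 j end); split.
  by move=> i; case: (split i) => j; [exact: H1|exact: H2].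
move=> y x; rewrite big_split_ord /= (E1 y x) (E2 y x) mulr_sumr.
congr (_ + _); apply: eq_bigr => j _.
  by rewrite (unsplitK (inl j) : split (lshift N2 j) = inl j) mulrA.
by rewrite (unsplitK (inr j) : split (rshift N1 j) = inr j).
Qed.

Lemma Wv_sum k N (c : 'I_N -> C) (vs : 'I_N -> vect) :
  (forall i, Wv k (vs i)) -> Wv k (fun z => \sum_(i < N) c i * vs i z).
Proof.
elim: N c vs => [|N IH] c vs H.
  by apply: Wv_ext (Wv0 k) _ => z _; rewrite big_ord0.
have := Wv_add (c ord_max) (H ord_max)
   (IH (fun i => c (widen_ord (leqnSn N) i)) (fun i => vs (widen_ord (leqnSn N) i)) (fun i => H _)).
move=> W; apply: Wv_ext W _ => z _.
by rewrite big_ord_recr /= addrC.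
Qed.

Lemma Wv_et k e : etacomp k e -> Wv k (fun z => e z [::]).
Proof.
move=> He; exists 1%N, (fun _ => 1), (fun _ => e); split => // y x.
by rewrite big_ord1 mul1r [x]tuple0.
Qed.

Lemma Wv_lift_ins a m l b g :
  (forall e, etacomp (a + m + b) e -> Wv (a + l + b) (ins a m l g (fun z => e z [::]))) ->
  forall v, Wv (a + m + b) v -> Wv (a + l + b) (ins a m l g v).
Proof.
move=> He v [N [c [fs [Hfs Hv]]]].
apply: Wv_ext (Wv_sum c (fun i => He _ (Hfs i))) _.
move=> z /split3 [u1 [u2 [u3 [-> s1 s2 s3]]]]; symmetry; rewrite insE //.
transitivity (\sum_(x : m.-tuple I) \sum_(i < N) c i * (g u2 x * fs i (u1 ++ x ++ u3) [::])).
  apply: eq_bigr => x _.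
  have sz : size (u1 ++ x ++ u3) == (a + m + b)%N by rewrite size3 s1 s3 size_tuple.
  have := Hv (Tuple sz) [tuple]; rewrite /= => ->.
  rewrite mulr_sumr; apply: eq_bigr => i _; by rewrite mulrCA.
rewrite exchange_big; apply: eq_bigr => i _; by rewrite insE // mulr_sumr.
Qed.

Lemma comp_ins m l g f :
  eqv l (fun z => Defs.comp m g f z [::]) (ins 0 m l g (fun y => f y [::])).
Proof.
move=> z sz; rewrite /ins drop0 take0 add0n -sz take_size drop_size /=.
apply: eq_bigr => y _; by rewrite cats0.
Qed.

Lemma layer_ins a p b f :
  eqv (a + p + b) (fun z => Defs.comp (a + b) (@layer R ns a p b) f z [::])
      (ins a 0 p (@eta_pow R ns p) (fun y => f y [::])).
Proof.
move=> z /split3 [u1 [u2 [u3 [-> s1 s2 s3]]]].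
rewrite insE // (sum_tuple0 (fun x => eta_pow R p u2 x * f (u1 ++ x ++ u3) [::])) /=.
rewrite /Defs.comp (sum_tuple_cat a b (fun y => layer R a p b (u1 ++ u2 ++ u3) y * f y [::])).
transitivity (\sum_(y1 : a.-tuple I) (u1 == y1)%:R * \sum_(y2 : b.-tuple I)
    (u3 == y2)%:R * (eta_pow R p u2 [::] * f (u1 ++ y2) [::])).
  apply: eq_bigr => y1 _; rewrite mulr_sumr; apply: eq_bigr => y2 _.
  rewrite /layer /tens /idm (take_size_cat _ s1) (drop_size_cat _ s1).
  rewrite (take_size_cat _ (size_tuple y1)) (drop_size_cat _ (size_tuple y1)).
  rewrite (take_size_cat _ s2) (drop_size_cat _ s2) take0 drop0.
  case: eqP => [<-|_]; last by rewrite !mul0r.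
  by rewrite !mul1r [eta_pow _ _ _ _ * _]mulrC -mulrA.
rewrite (sum_tuple_delta (fun y1 => \sum_(y2 : b.-tuple I)
    (u3 == y2)%:R * (eta_pow R p u2 [::] * f (u1 ++ y2) [::])) s1).
by rewrite (sum_tuple_delta (fun y2 => eta_pow R p u2 [::] * f (u1 ++ y2) [::]) s3).
Qed.

Definition Wt (s : seq I) : C := \prod_(a <- s) wt a.

Lemma mu_coef_diag c b :
  mu_coef R c b b = ((blk b == blk c) && (row b == row c))%:R * (row c == col c)%:R.
Proof.
rewrite /mu_coef eqxx andbT -natrM mulnb (eq_sym (blk c)).
case: (blk b == blk c) => //=.
case: (eqVneq (row b) (row c)) => [->|Hr] /=; first by rewrite andbT eq_sym.
by rewrite !andbF.
Qed.

Lemma tau_delta c : tau (fun d : I => (d == c)%:R) = (row c == col c)%:R * nb c / NN.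
Proof.
rewrite /tau.
under eq_bigr do rewrite (sum_delta (fun a => mu_coef R a _ _) c).
under eq_bigr do rewrite mu_coef_diag.
rewrite -mulr_suml row_count /NN mulrC; congr (_ * _); by rewrite mulrC.
Qed.

Lemma ip1E a b : ip1 R a b = (a == b)%:R * wt a.
Proof.
rewrite /ip1.
under eq_bigr do rewrite tau_delta mu_coefE -mulnb natrM -mulrA.
rewrite -mulr_sumr (sum_delta (fun c => (row c == col c)%:R * nb c / NN)).
rewrite /link blk_bstar col_bstar row_cab row_bstar.
case: (eqVneq (blk b) (blk a)) => H /=; last first.
  by rewrite mul0r Ieq (eq_sym (blk a)) (negbTE H) /= mul0r.
rewrite col_cab // Ieq H eqxx /= (eq_sym (row a)) (eq_sym (col a)) /wt.
have -> : nb (cab (bstar b) a) = nb a by rewrite /nb /nbn blk_cab blk_bstar H.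
case: (row b == row a); case: (col b == col a); by rewrite ?mul1r ?mul0r ?andbF.
Qed.

Lemma ipbE s t : size s = size t -> ipb R s t = (s == t)%:R * Wt s.
Proof.
elim: s t => [|a s IH] [|b t] //=.
  by rewrite /ipb /Wt !big_nil mul1r.
move=> [st]; rewrite /ipb /Wt /= !big_cons -/(ipb R s t) IH // ip1E eqseq_cons.
by rewrite -mulnb natrM /Wt; ring.
Qed.

Lemma ipE k (x y : vec R ns) :
  ip k x y = \sum_(s : k.-tuple I) x s * conjc (y s) * Wt s.
Proof.
rewrite /ip; apply: eq_bigr => s _.
transitivity (\sum_(t : k.-tuple I) (tval s == t)%:R * (x s * conjc (y t) * Wt s)).
  apply: eq_bigr => t _; rewrite ipbE ?size_tuple //; ring.
exact: (sum_tuple_delta (fun t => x s * conjc (y t) * Wt s) (size_tuple s)).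
Qed.

Lemma conj_wt a : conjc (wt a) = wt a.
Proof. by rewrite /wt /nb /NN rmorphM fmorphV !rmorph_nat. Qed.

Lemma conj_Wt s : conjc (Wt s) = Wt s.
Proof. by rewrite /Wt rmorph_prod; apply: eq_bigr => a _; exact: conj_wt. Qed.

Lemma wt_neq0 a : wt a != 0.
Proof. by rewrite /wt mulf_neq0 ?invr_eq0 ?nb_neq0 ?NN_neq0. Qed.

Lemma Wt_neq0 s : Wt s != 0.
Proof. by rewrite /Wt prodf_seq_neq0; apply/allP => a _; apply: wt_neq0. Qed.

Lemma conj_sum (T : finType) (F : T -> C) : conjc (\sum_(t : T) F t) = \sum_(t : T) conjc (F t).
Proof. exact: rmorph_sum. Qed.
Lemma conjM (a b : C) : conjc (a * b) = conjc a * conjc b.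
Proof. exact: rmorphM. Qed.
Lemma conjV (a : C) : conjc (a^-1) = (conjc a)^-1.
Proof. exact: fmorphV. Qed.

Definition adjc (f : mor R ns) : mor R ns := fun x y => conjc (f y x) * Wt y / Wt x.

Lemma adjc_adjoint k l f : is_adjoint k l f (adjc f).
Proof.
move=> x y; rewrite !ipE /apply /adjc.
transitivity (\sum_(s : l.-tuple I) \sum_(u : k.-tuple I) x u * f s u * conjc (y s) * Wt s).
  apply: eq_bigr => s _; rewrite !mulr_suml; apply: eq_bigr => u _; ring.
rewrite exchange_big; apply: eq_bigr => u _.
rewrite conj_sum !mulr_sumr mulr_suml; apply: eq_bigr => s _.
rewrite !conjM conjcK conjV !conj_Wt.
have := Wt_neq0 u => Hu.
by field.
Qed.

Lemma conj_nat n : conjc (n%:R : C) = n%:R.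
Proof. exact: rmorph_nat. Qed.

Lemma adjointE k l f (x0 : k.-tuple I) (y0 : l.-tuple I) :
  Defs.adjoint k l f x0 y0 = conjc (f y0 x0) * Wt y0 / Wt x0.
Proof.
set g := Defs.adjoint k l f.
have Hg : is_adjoint k l f g.
  by apply: epsilon_spec; exists (adjc f); apply: adjc_adjoint.
have := Hg (fun s => (s == tval x0)%:R) (fun s => (s == tval y0)%:R).
rewrite !ipE /apply.
have -> : \sum_(s : l.-tuple I) (\sum_(u : k.-tuple I) f s u * (tval u == tval x0)%:R) *
     conjc (tval s == tval y0)%:R * Wt s = f y0 x0 * Wt y0.
  transitivity (\sum_(s : l.-tuple I) (tval y0 == s)%:R * (f s x0 * Wt s)).
    apply: eq_bigr => s _.
    have -> : \sum_(u : k.-tuple I) f s u * (tval u == tval x0)%:R = f s x0.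
      transitivity (\sum_(u : k.-tuple I) (tval x0 == u)%:R * f s u).
        by apply: eq_bigr => u _; rewrite eq_sym mulrC.
      exact: (sum_tuple_delta (fun u => f s u) (size_tuple x0)).
    by rewrite conj_nat eq_sym; ring.
  exact: (sum_tuple_delta (fun s => f s x0 * Wt s) (size_tuple y0)).
have -> : \sum_(u : k.-tuple I) (tval u == tval x0)%:R *
     conjc (\sum_(s : l.-tuple I) g u s * (tval s == tval y0)%:R) * Wt u =
     conjc (g x0 y0) * Wt x0.
  transitivity (\sum_(u : k.-tuple I) (tval x0 == u)%:R * (conjc (g u y0) * Wt u)).
    apply: eq_bigr => u _.
    have -> : \sum_(s : l.-tuple I) g u s * (tval s == tval y0)%:R = g u y0.
      transitivity (\sum_(s : l.-tuple I) (tval y0 == s)%:R * g u s).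
        by apply: eq_bigr => s _; rewrite eq_sym mulrC.
      exact: (sum_tuple_delta (fun s => g u s) (size_tuple y0)).
    by rewrite eq_sym; ring.
  exact: (sum_tuple_delta (fun u => conjc (g u y0) * Wt u) (size_tuple x0)).
move=> E.
have E2 : conjc (g x0 y0) = f y0 x0 * Wt y0 / Wt x0.
  by rewrite E mulfK // Wt_neq0.
by rewrite -[g x0 y0]conjcK E2 !conjM conjV !conj_Wt.
Qed.

Lemma etas_formula c : Defs.adjoint 0%N 1%N (@eta R ns) [::] [:: c] = wt c * (row c == col c)%:R.
Proof.
have := adjointE (@eta R ns) [tuple] [tuple c]; rewrite /= => ->.
rewrite conj_nat /Wt big_cons !big_nil invr1 !mulr1 mulrC.
by [].
Qed.

Lemma mus_formula a b c : Defs.adjoint 2%N 1%N (@mu R ns) [:: a; b] [:: c] = mu_coef R a b c * kap c.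
Proof.
have := adjointE (@mu R ns) [tuple a; b] [tuple c]; rewrite /= => ->.
rewrite /Wt !big_cons !big_nil !mulr1 mu_coefE conj_nat.
case Lab: (link a b) => /=; last by rewrite !mul0r.
case: eqP => [->|_]; last by rewrite !mul0r.
have Hb : blk b = blk a by move: Lab => /andP[/eqP ->].
rewrite (wt_blk Hb) (wt_blk (blk_cab a b)) !mul1r /kap.
have := wt_neq0 a => Ha.
change (NN / nb (cab a b)) with (kap a).
by rewrite invfM mulrA mulfV // mul1r /kap /wt invf_div.
Qed.

Local Notation mus := (Defs.adjoint 2%N 1%N (@mu R ns)).
Local Notation etas := (Defs.adjoint 0%N 1%N (@eta R ns)).

Lemma ins_mus a v u1 x y u3 : size u1 = a ->
  ins a 1 2 mus v (u1 ++ [:: x; y] ++ u3) =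
  \sum_c mu_coef R x y c * kap c * v (u1 ++ c :: u3).
Proof.
move=> s1; rewrite insE //.
rewrite (sum_tuple1 (fun t => mus [:: x; y] t * v (u1 ++ t ++ u3))).
by apply: eq_bigr => c _; rewrite mus_formula.
Qed.

Lemma ins_etas a v u1 u3 : size u1 = a ->
  ins a 1 0 etas v (u1 ++ [::] ++ u3) =
  \sum_c wt c * (row c == col c)%:R * v (u1 ++ c :: u3).
Proof.
move=> s1; rewrite insE //.
rewrite (sum_tuple1 (fun t => etas [::] t * v (u1 ++ t ++ u3))).
by apply: eq_bigr => c _; rewrite etas_formula.
Qed.

Lemma ins_mu a v u1 d u3 : size u1 = a ->
  ins a 2 1 (@mu R ns) v (u1 ++ [:: d] ++ u3) =
  \sum_x \sum_y mu_coef R x y d * v (u1 ++ x :: y :: u3).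
Proof.
move=> s1; rewrite insE //.
rewrite (sum_tuple_cat 1 1 (fun t => mu R [:: d] t * v (u1 ++ t ++ u3))).
rewrite (sum_tuple1 (fun t1 => \sum_(t2 : 1.-tuple I) mu R [:: d] (t1 ++ t2) * v (u1 ++ (t1 ++ t2) ++ u3))).
apply: eq_bigr => x _.
by rewrite (sum_tuple1 (fun t2 => mu R [:: d] ([:: x] ++ t2) * v (u1 ++ ([:: x] ++ t2) ++ u3))).
Qed.

Lemma ins_eta a v u1 c u3 : size u1 = a ->
  ins a 0 1 (@eta R ns) v (u1 ++ [:: c] ++ u3) = (row c == col c)%:R * v (u1 ++ u3).
Proof.
move=> s1; rewrite insE //.
by rewrite (sum_tuple0 (fun t => eta R [:: c] t * v (u1 ++ t ++ u3))).
Qed.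

Lemma eta_pow_Ef p s : size s = p.+1 -> eta_pow R p.+1 s [::] = Ef s.
Proof.
elim: p s => [|p IH] s.
  case: s => [|c0 [|]] //= _.
  rewrite /eta_pow /Defs.comp /=.
  rewrite (sum_tuple1 (fun y => @idm R ns [:: c0] y * @eta R ns y [::])).
  under eq_bigr => c _ do rewrite /idm eqseq_cons andbT.
  rewrite (sum_deltaC (fun c => @eta R ns [:: c] [::]) c0).
  by rewrite /= /link eqxx /= andbT expr0 mulr1 eq_sym.
move=> ss.
have [w1 [w2 [-> s1 s2]]] := split_at (n1 := p) (n2 := 2) (etrans ss (esym (addn2 p))).
case: w2 s2 => [|a [|b [|]]] //= _.
transitivity (\sum_(y' : p.+1.-tuple I) tens p p (@idm R ns) mus (w1 ++ [:: a; b]) y' * Ef y').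
  rewrite /eta_pow /= /Defs.comp.
  transitivity (\sum_(y : 1.-tuple I) \sum_(y' : p.+1.-tuple I)
     tens p p (@idm R ns) mus (w1 ++ [:: a; b]) y' * (mu_adj_pow R p y' y * eta R y [::])).
    apply: eq_bigr => y _; rewrite big_distrl /=; apply: eq_bigr => y' _; by rewrite mulrA.
  rewrite exchange_big; apply: eq_bigr => y' _.
  rewrite -IH ?size_tuple // /eta_pow /= /Defs.comp big_distrr /=.
  by [].
have := sum_tuple_cat p 1 (fun y' => tens p p (@idm R ns) mus (w1 ++ [:: a; b]) y' * Ef y').
rewrite addn1 => ->.
transitivity (\sum_(x1 : p.-tuple I) (w1 == x1)%:R *
   \sum_(x2 : 1.-tuple I) mus [:: a; b] x2 * Ef (x1 ++ x2)).
  apply: eq_bigr => x1 _; rewrite big_distrr /=; apply: eq_bigr => x2 _.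
  rewrite /tens /idm (take_size_cat _ s1) (drop_size_cat _ s1).
  rewrite (take_size_cat _ (size_tuple x1)) (drop_size_cat _ (size_tuple x1)).
  by rewrite mulrA.
rewrite (sum_tuple_delta (fun x1 => \sum_(x2 : 1.-tuple I) mus [:: a; b] x2 * Ef (x1 ++ x2)) s1).
rewrite (sum_tuple1 (fun x2 => mus [:: a; b] x2 * Ef (w1 ++ x2))).
under eq_bigr do rewrite mus_formula.
exact: (mus_gen a b w1 [::]).
Qed.


Definition Eop : mor R ns := fun s _ => Ef s.

Lemma Wv_eqn k1 k2 v : k1 = k2 -> Wv k1 v -> Wv k2 v.
Proof. by move=> ->. Qed.

Lemma Wv_scale k c v : Wv k v -> Wv k (fun z => c * v z).
Proof.
move=> H; apply: Wv_ext (Wv_add c H (Wv0 k)) _ => z _; by rewrite addr0.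
Qed.

Lemma et_blk a p b f : (0 < p)%N ->
  eqv (a + p + b) (fun z => Defs.comp (a + b) (@layer R ns a p b) f z [::])
                  (ins a 0 p Eop (fun y => f y [::])).
Proof.
move: p => [//|p] _ z sz; rewrite (@layer_ins a p.+1 b f z sz).
apply: (@ins_ext a 0 p.+1 b) => // s x ss; by rewrite [x]tuple0 /= /Eop eta_pow_Ef.
Qed.

Lemma ins_Eop0 a b v : eqv (a + 0 + b) (ins a 0 0 Eop v) v.
Proof.
move=> z /split3 [u1 [u2 [u3 [-> s1 s2 s3]]]].
case: u2 s2 => // _; rewrite insE //.
by rewrite (sum_tuple0 (fun t => Eop [::] t * v (u1 ++ t ++ u3))) /Eop /= mul1r.
Qed.

Lemma Wv_blk a p b v : Wv (a + b) v -> Wv (a + p + b) (ins a 0 p Eop v).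
Proof.
case: p => [|p] Hv.
  apply: Wv_ext (Wv_eqn (esym (f_equal (addn^~ b) (addn0 a))) Hv) _ => z sz.
  by rewrite (@ins_Eop0 a b v z).
apply: (@Wv_lift_ins a 0 p.+1 b) => [e He|]; last by rewrite addn0.
have He' : etacomp (a + b) e by rewrite addn0 in He.
have := Wv_et (etacomp_cons (a := a) (p := p.+1) (b := b) He' (ltn0Sn p) erefl).
move=> W; apply: Wv_ext W _ => z sz; exact: et_blk.
Qed.

Lemma closed1 l (g : mor R ns) :
  (forall j e (s : seq I), size s = (j + l + e)%N -> ins j 1 l g Ef s = Ef s) ->
  forall K e, etacomp K e -> forall a b, K = (a + 1 + b)%N ->
  Wv (a + l + b) (ins a 1 l g (fun z => e z [::])).
Proof.
move=> Hin K e0; elim => [|k f a' p b' Hf IH p0 Ek] a b.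
  move=> H; exfalso; lia.
subst k; move=> EK.
have E1 : eqv (a + l + b) (ins a 1 l g (ins a' 0 p Eop (fun y => f y [::])))
    (ins a 1 l g (fun z => Defs.comp (a' + b') (@layer R ns a' p b') f z [::])).
  apply: ins_eqv => z sz; symmetry.
  exact: (@et_blk a' p b' f p0 z (etrans sz (esym EK))).
apply: Wv_ext E1.
have Wf : Wv (a' + b') (fun y => f y [::]) := Wv_et Hf.
case: (ltnP a a') => Ha.
  have [d Hd] : exists d, a' = (a + 1 + d)%N by exists (a' - a - 1)%N; lia.
  subst a'.
  have Hb : b = (d + p + b')%N by lia.
  subst b.
  have W1 := IH a (d + b')%N ltac:(lia).
  have W2 := @Wv_blk (a + l + d) p b' _ (Wv_eqn (k1 := (a + l + (d + b'))%N) (k2 := (a + l + d + b')%N) ltac:(lia) W1).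
  apply: (Wv_eqn (k1 := (a + l + d + p + b')%N)); first lia.
  apply: Wv_ext W2 _ => z sz; symmetry.
  exact: (@ins_comm a 1 l d 0 p b' g Eop (fun y => f y [::]) z sz).
case: (ltnP a (a' + p)) => Ha2.
  have [j Hj] : exists j, a = (a' + j)%N by exists (a - a')%N; lia.
  subst a.
  have [e He] : exists e, p = (j + 1 + e)%N by exists (p - j - 1)%N; lia.
  subst p.
  have Hb : b = (e + b')%N by lia.
  subst b.
  have W := @Wv_blk a' (j + l + e) b' _ Wf.
  apply: (Wv_eqn (k1 := (a' + (j + l + e) + b')%N)); first lia.
  apply: Wv_ext W _ => z sz; symmetry.
  rewrite (@ins_overlap a' j 1 l e 0 b' g Eop (fun y => f y [::]) z sz).
  apply: (@ins_ext a' 0 (j + l + e) b') => // s x ss.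
  rewrite /Eop /=; exact: (Hin j e s ss).
have [d Hd] : exists d, a = (a' + p + d)%N by exists (a - a' - p)%N; lia.
subst a.
have Hb : b' = (d + 1 + b)%N by lia.
subst b'.
have W1 := IH (a' + d)%N b ltac:(lia).
have W2 := @Wv_blk a' p (d + l + b) _ (Wv_eqn (k1 := (a' + d + l + b)%N) (k2 := (a' + (d + l + b))%N) ltac:(lia) W1).
apply: (Wv_eqn (k1 := (a' + p + (d + l + b))%N)); first lia.
apply: Wv_ext W2 _ => z sz.
have := @ins_comm a' 0 p d 1 l b Eop g (fun y => f y [::]) z.
rewrite addn0 => ->; first by [].
by rewrite sz; lia.
Qed.

Lemma Hin_mus j e s : size s = (j + 2 + e)%N -> ins j 1 2 mus Ef s = Ef s.
Proof.
move/split3 => [w1 [w2 [w3 [-> s1 s2 s3]]]].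
case: w2 s2 => [|x [|y [|]]] // _.
rewrite ins_mus //; exact: mus_gen.
Qed.

Lemma Hin_etas j e s : size s = (j + 0 + e)%N -> ins j 1 0 etas Ef s = Ef s.
Proof.
move/split3 => [w1 [w2 [w3 [-> s1 s2 s3]]]].
case: w2 s2 => // _.
rewrite ins_etas //; exact: etas_gen.
Qed.

Lemma Hin_mu j e s : size s = (j + 1 + e)%N -> ins j 2 1 (@mu R ns) Ef s = NN * Ef s.
Proof.
move/split3 => [w1 [w2 [w3 [-> s1 s2 s3]]]].
case: w2 s2 => [|d [|]] // _.
rewrite ins_mu //; exact: mu_gen.
Qed.

Lemma closed_mus a b v : Wv (a + 1 + b) v -> Wv (a + 2 + b) (ins a 1 2 mus v).
Proof.
apply: Wv_lift_ins => e He; exact: (closed1 Hin_mus He erefl).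
Qed.

Lemma closed_etas a b v : Wv (a + 1 + b) v -> Wv (a + 0 + b) (ins a 1 0 etas v).
Proof.
apply: Wv_lift_ins => e He; exact: (closed1 Hin_etas He erefl).
Qed.

Definition Dop : mor R ns := fun s x => if x is [:: y] then Dv s y else 0.

Lemma ins_scale a m l c (g : mor R ns) v z :
  ins a m l (fun s x => c * g s x) v z = c * ins a m l g v z.
Proof. rewrite /ins mulr_sumr; apply: eq_bigr => x _; by rewrite mulrA. Qed.

Lemma Wv_D a p b v : Wv (a + 1 + b) v -> Wv (a + p.+1 + b) (ins a 1 p.+1 Dop v).
Proof.
move=> Hv; elim: p => [|p IH].
  have E : eqv (a + 1 + b) (ins a 1 1 Dop v) (ins a 1 1 (@idm R ns) v).
    apply: ins_ext => s x; case: s => [|s0 [|]] //= _.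
    case: x => -[|y [|]] //= _.
    by rewrite Dv1 /idm eqseq_cons andbT.
  apply: Wv_ext Hv _ => z sz.
  by rewrite (E z sz) (@ins_id a 1 b v z sz).
have W := closed_mus (a := (a + p)%N) (b := b) (Wv_eqn (k1 := (a + p.+1 + b)%N) (k2 := (a + p + 1 + b)%N) ltac:(lia) IH).
apply: (Wv_eqn (k1 := (a + p + 2 + b)%N)); first lia.
apply: Wv_ext W _ => z sz.
have := @ins_overlap a p 1 2 0 1 b mus Dop v z.
rewrite !addn0 addn1 addn2 => ->; last by rewrite sz; lia.
have E : eqv (a + p.+2 + b) (ins a 1 p.+2 (fun s x => ins p 1 2 mus (Dop^~ x) s) v) (ins a 1 p.+2 Dop v).
  apply: ins_ext => s x ss.
  have [w1 [w2 [-> s1 s2]]] := split_at (n1 := p) (n2 := 2) (etrans ss (esym (addn2 p))).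
  case: w2 s2 => [|x1 [|x2 [|]]] // _.
  case: x => -[|y [|]] //= _.
  rewrite -[w1 ++ [:: x1; x2]]cats0 -catA (@ins_mus p (Dop^~ [:: y]) w1 x1 x2 [::] s1) /Dop /=.
  exact: (Dv_mus w1 x1 x2 [::] y).
have sz' : size z = (a + p.+2 + b)%N by rewrite sz; lia.
by rewrite (E z sz').
Qed.

Lemma straddle_left a p b f :
  eqv (a + 1 + (p + b)) (ins a 2 1 (@mu R ns) (ins (a + 1) 0 p.+1 Eop f))
      (ins a 1 p.+1 Dop f).
Proof.
move=> z; rewrite addnA => /split4 [u1 [w [t [u3 [-> s1 sw st s3]]]]].
case: w sw => [|d [|]] // _.
rewrite (@ins_mu a _ u1 d (t ++ u3) s1).
have -> : u1 ++ [:: d] ++ t ++ u3 = u1 ++ (d :: t) ++ u3 by [].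
have sdt : size (d :: t) = p.+1 by rewrite /= st.
rewrite (@insE a 1 p.+1 Dop f u1 (d :: t) u3 s1 sdt).
rewrite (sum_tuple1 (fun x => Dop (d :: t) x * f (u1 ++ x ++ u3))) /Dop.
apply: eq_bigr => x _.
rewrite -Dv_left mulr_suml; apply: eq_bigr => y _.
have -> : u1 ++ [:: x, y & t ++ u3] = (u1 ++ [:: x]) ++ (y :: t) ++ u3 by rewrite -catA.
rewrite insE ?size_cat ?s1 ?addn1 //=.
rewrite (sum_tuple0 (fun t0 => Eop (y :: t) t0 * f ((u1 ++ [:: x]) ++ t0 ++ u3))) /Eop /=.
by rewrite -catA mulrA.
Qed.

Lemma straddle_right a p b f :
  eqv (a + p + 1 + b) (ins (a + p) 2 1 (@mu R ns) (ins a 0 p.+1 Eop f))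
      (ins a 1 p.+1 Dop f).
Proof.
move=> z /split4 [u1 [w [w2 [u3 [-> s1 sw s2 s3]]]]].
case: w2 s2 => [|d [|]] // _.
have -> : u1 ++ w ++ [:: d] ++ u3 = (u1 ++ w) ++ [:: d] ++ u3 by rewrite catA.
rewrite (@ins_mu (a + p) _ (u1 ++ w) d u3) ?size_cat ?s1 ?sw //.
have -> : (u1 ++ w) ++ [:: d] ++ u3 = u1 ++ (w ++ [:: d]) ++ u3 by rewrite !catA.
rewrite insE ?size_cat ?sw ?addn1 // (sum_tuple1 (fun x => Dop (w ++ [:: d]) x * f (u1 ++ x ++ u3))) /Dop.
rewrite exchange_big; apply: eq_bigr => y _.
rewrite -Dv_right mulr_suml; apply: eq_bigr => x _.
have -> : (u1 ++ w) ++ [:: x, y & u3] = u1 ++ (w ++ [:: x]) ++ (y :: u3) by rewrite -!catA.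
rewrite insE ?size_cat ?sw ?addn1 //=.
rewrite (sum_tuple0 (fun t0 => Eop (w ++ [:: x]) t0 * f (u1 ++ t0 ++ y :: u3))) /Eop /=.
by rewrite mulrA.
Qed.

Lemma closed_mu_et K e0 : etacomp K e0 -> forall a b, K = (a + 2 + b)%N ->
  Wv (a + 1 + b) (ins a 2 1 (@mu R ns) (fun z => e0 z [::])).
Proof.
elim => [|k f a' p b' Hf IH p0 Ek] a b.
  move=> H; exfalso; lia.
subst k => EK.
have E1 : eqv (a + 1 + b) (ins a 2 1 (@mu R ns) (ins a' 0 p Eop (fun y => f y [::])))
    (ins a 2 1 (@mu R ns) (fun z => Defs.comp (a' + b') (@layer R ns a' p b') f z [::])).
  apply: ins_eqv => z sz; symmetry.
  exact: (@et_blk a' p b' f p0 z (etrans sz (esym EK))).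
apply: Wv_ext E1.
have Wf : Wv (a' + b') (fun y => f y [::]) := Wv_et Hf.
case: (leqP (a + 2) a') => H1.
  have [d Hd] : exists d, a' = (a + 2 + d)%N by exists (a' - a - 2)%N; lia.
  subst a'.
  have Hb : b = (d + p + b')%N by lia.
  subst b.
  have W1 := IH a (d + b')%N ltac:(lia).
  have W2 := @Wv_blk (a + 1 + d) p b' _
     (Wv_eqn (k1 := (a + 1 + (d + b'))%N) (k2 := (a + 1 + d + b')%N) ltac:(lia) W1).
  apply: (Wv_eqn (k1 := (a + 1 + d + p + b')%N)); first lia.
  apply: Wv_ext W2 _ => z sz; symmetry.
  exact: (@ins_comm a 2 1 d 0 p b' (@mu R ns) Eop (fun y => f y [::]) z sz).
case: (eqVneq (a + 1)%N a') => H2.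
  subst a'.
  case: p p0 EK => [//|p'] _ EK.
  have Hb : b = (p' + b')%N by lia.
  subst b.
  have W := @Wv_D a p' b' _ Wf.
  apply: (Wv_eqn (k1 := (a + p'.+1 + b')%N)); first lia.
  apply: Wv_ext W _ => z sz; symmetry.
  have sz' : size z = (a + 1 + (p' + b'))%N by rewrite sz; lia.
  exact: (@straddle_left a p' b' _ z sz').
have Ha : (a' <= a)%N by move: H1 H2 => /negP; lia.
case: (leqP (a + 2) (a' + p)) => H3.
  have [j Hj] : exists j, a = (a' + j)%N by exists (a - a')%N; lia.
  subst a.
  have [e He] : exists e, p = (j + 2 + e)%N by exists (p - j - 2)%N; lia.
  subst p.
  have Hb : b = (e + b')%N by lia.
  subst b.
  have W := Wv_scale NN (@Wv_blk a' (j + 1 + e) b' _ Wf).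
  apply: (Wv_eqn (k1 := (a' + (j + 1 + e) + b')%N)); first lia.
  apply: Wv_ext W _ => z sz; symmetry.
  rewrite (@ins_overlap a' j 2 1 e 0 b' (@mu R ns) Eop (fun y => f y [::]) z sz).
  rewrite -ins_scale.
  apply: (@ins_ext a' 0 (j + 1 + e) b') => // s x ss.
  rewrite /Eop /=; exact: (Hin_mu ss).
case: (eqVneq (a + 1)%N (a' + p)%N) => H4.
  case: p p0 EK H3 H4 => [//|p'] _ EK H3 H4.
  have Ha2 : a = (a' + p')%N by lia.
  subst a.
  have Hb : b' = (1 + b)%N by lia.
  subst b'.
  have W := @Wv_D a' p' b _ (Wv_eqn (k1 := (a' + (1 + b))%N) (k2 := (a' + 1 + b)%N) ltac:(lia) Wf).
  apply: (Wv_eqn (k1 := (a' + p'.+1 + b)%N)); first lia.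
  apply: Wv_ext W _ => z sz; symmetry.
  have sz' : size z = (a' + p' + 1 + b)%N by rewrite sz; lia.
  exact: (@straddle_right a' p' b _ z sz').
have [d Hd] : exists d, a = (a' + p + d)%N by exists (a - a' - p)%N; move: H3 H4 => /negP; lia.
subst a.
have Hb : b' = (d + 2 + b)%N by lia.
subst b'.
have W1 := IH (a' + d)%N b ltac:(lia).
have W2 := @Wv_blk a' p (d + 1 + b) _
   (Wv_eqn (k1 := (a' + d + 1 + b)%N) (k2 := (a' + (d + 1 + b))%N) ltac:(lia) W1).
apply: (Wv_eqn (k1 := (a' + p + (d + 1 + b))%N)); first lia.
apply: Wv_ext W2 _ => z sz.
have := @ins_comm a' 0 p d 2 1 b Eop (@mu R ns) (fun y => f y [::]) z.
rewrite addn0 => ->; first by [].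
by rewrite sz; lia.
Qed.

Lemma closed_mu a b v : Wv (a + 2 + b) v -> Wv (a + 1 + b) (ins a 2 1 (@mu R ns) v).
Proof.
apply: Wv_lift_ins => e He; exact: (closed_mu_et He erefl).
Qed.

Lemma closed_eta a b v : Wv (a + 0 + b) v -> Wv (a + 1 + b) (ins a 0 1 (@eta R ns) v).
Proof.
move=> Hv.
have W := @Wv_blk a 1 b v (Wv_eqn (k1 := (a + 0 + b)%N) (k2 := (a + b)%N) ltac:(lia) Hv).
apply: Wv_ext W _ => z sz; symmetry.
apply: (@ins_ext a 0 1 b) => // s x; case: s => [|c [|]] //= _.
by rewrite [x]tuple0 /Eop /Ef /= /link eqxx /= andbT expr0 mulr1 eq_sym.
Qed.

Lemma closed_id a m b v : Wv (a + m + b) v -> Wv (a + m + b) (ins a m m (@idm R ns) v).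
Proof. move=> Hv; apply: Wv_ext Hv _ => z sz; by rewrite (@ins_id a m b v z sz). Qed.

Lemma closed_gen m l g : gen m l g ->
  forall a b v, Wv (a + m + b) v -> Wv (a + l + b) (ins a m l g v).
Proof.
case => a b v.
- exact: closed_eta.
- exact: closed_mu.
- exact: closed_etas.
- exact: closed_mus.
- exact: closed_id.
Qed.

Lemma closed_tgen m l G : tgen m l G ->
  forall a b v, Wv (a + m + b) v -> Wv (a + l + b) (ins a m l G v).
Proof.
elim => [k l' f Hf|k1 l1 f k2 l2 g Hf Hg IH] a b v Hv.
  exact: closed_gen.
have W1 := IH (a + k1)%N b v (Wv_eqn (k1 := (a + (k1 + k2) + b)%N) (k2 := (a + k1 + k2 + b)%N) ltac:(lia) Hv).
have W2 := closed_gen Hf (a := a) (b := (l2 + b)%N)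
   (Wv_eqn (k1 := (a + k1 + l2 + b)%N) (k2 := (a + k1 + (l2 + b))%N) ltac:(lia) W1).
apply: (Wv_eqn (k1 := (a + l1 + (l2 + b))%N)); first lia.
apply: Wv_ext W2 _ => z sz; symmetry.
have sz' : size z = (a + (l1 + l2) + b)%N by rewrite sz; lia.
exact: (@ins_tens a k1 l1 k2 l2 b f g v z sz').
Qed.

Lemma cgen_W k l F : cgen k l F -> k = 0%N -> Wv l (fun z => F z [::]).
Proof.
elim => [k' l' f Hf|k' m l' f g Hf IH Hg] Ek; subst.
  have W0 : Wv 0 (fun y => @idm R ns y [::]) := Wv_et (@etacomp_nil R ns).
  have W := closed_tgen Hf (a := 0%N) (b := 0%N) W0.
  apply: (Wv_eqn (k1 := (0 + l' + 0)%N)); first lia.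
  apply: Wv_ext W _ => z sz.
  rewrite -(@comp_ins 0 l' f (@idm R ns) z); last by rewrite sz; lia.
  rewrite /Defs.comp (sum_tuple0 (fun y => f z y * @idm R ns y [::])) /idm eqxx.
  by rewrite mulr1.
have W := closed_tgen Hg (a := 0%N) (b := 0%N) (Wv_eqn (k1 := m) (k2 := (0 + m + 0)%N) ltac:(lia) (IH erefl)).
apply: (Wv_eqn (k1 := (0 + l' + 0)%N)); first lia.
apply: Wv_ext W _ => z sz.
by rewrite -(@comp_ins m l' g f z); last by rewrite sz; lia.
Qed.

Lemma main_sec k (f : mor R ns) :
  HomCB 0 k f -> inspan (@etacomp R ns k) 0 k f.
Proof.
move=> [N [c [fs [Hfs Ef']]]].
have W := Wv_sum c (fun i => cgen_W (Hfs i) erefl).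
have W' : Wv k (fun z => f z [::]).
  apply: Wv_ext W _ => z sz.
  have := Ef' (Tuple (introT eqP sz)) [tuple]; rewrite /= => ->.
  by [].
move: W' => [N' [c' [fs' [H1 H2]]]].
exists N', c', fs'; split => // y x.
rewrite [x]tuple0; exact: H2.
Qed.
End Main.

Local Close Scope ring_scope.

Theorem lemma3p2 (R : realType) (ns : seq nat) :
  all (fun m => 0 < m)%N ns ->
  (4 <= \sum_(m <- ns) m ^ 2)%N ->
  forall (k : nat) (f : mor R ns),
    @HomCB R ns 0 k f -> @inspan R ns (@etacomp R ns k) 0 k f.
Proof.
move=> H1 H2 k f; exact: (main_sec H1 H2).
Qed.
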